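(* Let $n \geq k \geq 1$ and let $Z_1,\ldots,Z_k$ be subsets of $[n]$ with $|Z_i| = k-1$ for every $i\in[k]$. Let $\alpha_1,\ldots,\alpha_n$ be indeterminates and, for $i\in[k]$, let $f_i(x)=\prod_{j\in Z_i}(x-\alpha_j)=\sum_{j=1}^{k} a_{i,j}x^{j-1}$, where each $a_{i,j}$ is a polynomial in $\alpha_1,\ldots,\alpha_n$ with integer coefficients. Let $\mathbf{A}=(a_{i,j})_{i,j\in[k]}$ and \[ F(\alpha_1,\ldots,\alpha_n)=\det(\mathbf{A})\prod_{1\le j<i\le n}(\alpha_i-\alpha_j). \] Then for every $t\in[n]$, the degree of $F$ in the variable $\alpha_t$ is at most $n+k-2$.
   Context: $[n]=\{1,\ldots,n\}$. *)

(* Defs.v *)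
From HB Require Import structures.
From mathcomp Require Import all_boot all_order all_algebra.
Set Implicit Arguments. Unset Strict Implicit. Unset Printing Implicit Defensive.
Import GRing.Theory.
Local Open Scope ring_scope.

(* Indices: [n] is represented by 'I_n (0-based), [k] by 'I_k.
   alpha : 'I_n -> S gives the values of alpha_1..alpha_n in a commutative ring S. *)

Definition fpoly (S : comNzRingType) (n k : nat) (Z : 'I_k -> {set 'I_n})
  (alpha : 'I_n -> S) (i : 'I_k) : {poly S} :=
  \prod_(j in Z i) ('X - (alpha j)%:P).

(* A = (a_{i,j}), a_{i,j} = coefficient of x^{j-1} in f_i (0-based: x^j) *)
Definition Amx (S : comNzRingType) (n k : nat) (Z : 'I_k -> {set 'I_n})
  (alpha : 'I_n -> S) : 'M[S]_k :=
  \matrix_(i < k, j < k) (fpoly Z alpha i)`_j.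

Definition Fval (S : comNzRingType) (n k : nat) (Z : 'I_k -> {set 'I_n})
  (alpha : 'I_n -> S) : S :=
  \det (Amx Z alpha) *
  \prod_(i < n) \prod_(j < n | (j < i)%N) (alpha i - alpha j).

Definition alpha_at (R : comNzRingType) (n : nat) (t : 'I_n) (c : 'I_n -> R)
  (j : 'I_n) : {poly R} :=
  if j == t then 'X else (c j)%:P.

(* Main.v *)
Require Import Defs.
From HB Require Import structures.
From mathcomp Require Import all_boot all_order all_algebra.
From mathcomp Require Import zify.
Import GRing.Theory.


Lemma size_prod_bnd (R : comNzRingType) (I : Type) (r : seq I) (P : pred I)
  (F : I -> {poly R}) (d : I -> nat) :
  (forall i, P i -> (size (F i) <= (d i).+1)%N) ->
  (size ((\prod_(i <- r | P i) F i)%R) <= (\sum_(i <- r | P i) d i).+1)%N.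
Proof.
move=> H; apply: (big_ind2 (fun (p : {poly R}) (m : nat) => (size p <= m.+1)%N)) => //.
- by rewrite size_poly1.
- move=> p1 m1 p2 m2 h1 h2; apply: leq_trans (size_polyMleq _ _) _; lia.
Qed.

Lemma size_sum_bnd (R : comNzRingType) (I : Type) (r : seq I) (P : pred I)
  (F : I -> {poly R}) (d : nat) :
  (forall i, P i -> (size (F i) <= d)%N) ->
  (size ((\sum_(i <- r | P i) F i)%R) <= d)%N.
Proof.
move=> H; apply: (big_ind (fun (p : {poly R}) => (size p <= d)%N)) => //.
- by rewrite size_poly0.
- move=> p q hp hq; apply: leq_trans (size_polyD _ _) _; by rewrite geq_max hp hq.
Qed.

Lemma coef_prod_bnd (R : comNzRingType) (I : Type) (r : seq I) (P : pred I)
  (F : I -> {poly {poly R}}) (d : I -> nat) :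
  (forall i, P i -> forall j, (size ((F i)`_j)%R <= (d i).+1)%N) ->
  forall j, (size ((\prod_(i <- r | P i) F i)`_j)%R <= (\sum_(i <- r | P i) d i).+1)%N.
Proof.
move=> H; apply: (big_ind2 (fun (p : {poly {poly R}}) (m : nat) => forall j, (size (p`_j)%R <= m.+1)%N)) => //.
- move=> j; rewrite coef1; case: (j == 0)%N; by rewrite ?size_poly1 ?size_poly0.
- move=> p1 m1 p2 m2 h1 h2 j; rewrite coefM; apply: size_sum_bnd => l _.
  apply: leq_trans (size_polyMleq _ _) _; have := h1 l; have := h2 (j - l)%N; lia.
Qed.

Lemma alpha_size (R : comNzRingType) n (t : 'I_n) (c : 'I_n -> R) j :
  (size (alpha_at t c j) <= (j == t).+1)%N.
Proof.
rewrite /alpha_at; case: (j == t); first by rewrite size_polyX.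
exact: size_polyC_leq1.
Qed.

Lemma sum_lt_card n (t : nat) : (t <= n)%N -> (\sum_(i < n | (i < t)%N) 1)%N = t.
Proof.
move=> htn; rewrite -(@big_ord_widen_cond _ 0%N addn t n xpredT (fun _ => 1%N) htn).
by rewrite sum1_card card_ord.
Qed.

Lemma vdm_size (R : comNzRingType) n (t : 'I_n) (c : 'I_n -> R) :
  (size (\prod_(i < n) \prod_(j < n | (j < i)%N) (alpha_at t c i - alpha_at t c j))%R
    <= n)%N.
Proof.
have H1 : forall i : 'I_n, (size (\prod_(j < n | (j < i)%N) (alpha_at t c i - alpha_at t c j))%R
    <= (\sum_(j < n | (j < i)%N) ((i == t) + (j == t)))%N.+1)%N.
  move=> i; apply: size_prod_bnd => j _.
  apply: leq_trans (size_polyD _ _) _; rewrite size_polyN geq_max.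
  have := @alpha_size R n t c i; have := @alpha_size R n t c j; move=> h1 h2; apply/andP; split; [apply: leq_trans h2 _|apply: leq_trans h1 _]; lia.
apply: leq_trans (@size_prod_bnd _ _ _ _ _ _ (fun i _ => H1 i)) _.
rewrite (eq_bigr (fun i : 'I_n => (\sum_(j < n | (j < i)%N) (i == t)) +
   \sum_(j < n | (j < i)%N) (j == t))%N); last by move=> i _; rewrite big_split.
rewrite big_split /=.
have HA : (\sum_(i < n) \sum_(j < n | (j < i)%N) (i == t))%N = t.
  rewrite (bigD1 t) //= [X in (_ + X)%N]big1 ?addn0.
    rewrite (eq_bigr (fun _ => 1%N)) ?sum_lt_card //; first exact: ltnW.
    by move=> j _; rewrite eqxx.
  move=> i hi; apply: big1 => j _; by rewrite (negPf hi).
have HB : (\sum_(i < n) \sum_(j < n | (j < i)%N) (j == t))%N = (\sum_(i < n) (t < i))%N.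
  apply: eq_bigr => i _.
  case: (ltnP t i) => hti.
    rewrite (bigD1 t) //= eqxx big1 // => j /andP [_ /negPf ->] //.
  by rewrite big1 // => j hj; apply/eqP; rewrite eqb0; apply/eqP => ejt; move: hj; rewrite ejt; lia.
have HC : (\sum_(i < n) (t < i) + \sum_(i < n) (i <= t))%N = n.
  rewrite -big_split /= -[X in _ = X]card_ord -sum1_card.
  by apply: eq_bigr => i _; case: (ltnP t i).
have HD : (\sum_(i < n) (i <= t))%N = t.+1.
  rewrite -(@sum_lt_card n t.+1 (ltn_ord t)) [RHS]big_mkcond /=.
  by apply: eq_bigr => i _; rewrite ltnS; case: (i <= t)%N.
rewrite HA HB; have := ltn_ord t; lia.
Qed.

Lemma XsubC_coef (R : comNzRingType) (a : {poly R}) (d : nat) l :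
  (size a <= d.+1)%N -> (size (('X - a%:P)`_l)%R <= d.+1)%N.
Proof.
move=> ha; rewrite coefB coefX coefC.
case: l => [|[|l]] /=.
- by rewrite sub0r size_polyN.
- by rewrite subr0 size_poly1.
- by rewrite subr0 size_poly0.
Qed.

Lemma fpoly_coef (R : comNzRingType) n k (Z : 'I_k -> {set 'I_n}) (t : 'I_n)
  (c : 'I_n -> R) i l :
  (size ((fpoly Z (alpha_at t c) i)`_l)%R <= (t \in Z i).+1)%N.
Proof.
rewrite /fpoly.
apply: leq_trans (@coef_prod_bnd _ _ _ _ _ (fun j => nat_of_bool (j == t)) _ l) _.
  by move=> j _ l'; apply: XsubC_coef; apply: alpha_size.
case: (boolP (t \in Z i)) => ht.
  rewrite (bigD1 t) //= eqxx big1 // => j /andP [_ /negPf ->] //.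
rewrite big1 // => j hj; apply/eqP; rewrite eqb0; apply/eqP => ejt.
by move: hj ht; rewrite ejt => ->.
Qed.

Lemma det_bnd (R : comNzRingType) n k (Z : 'I_k -> {set 'I_n}) (t : 'I_n)
  (c : 'I_n -> R) :
  (size (\det (Amx Z (alpha_at t c)))%R <= (\sum_(i < k) (t \in Z i)).+1)%N.
Proof.
rewrite /determinant; apply: size_sum_bnd => s _.
rewrite size_Msign; apply: size_prod_bnd => i _.
by rewrite mxE; apply: fpoly_coef.
Qed.

Local Open Scope ring_scope.

Lemma det_zero (R : comNzRingType) n k (hk : (0 < k)%N) (Z : 'I_k -> {set 'I_n})
  (hZ : forall i, #|Z i| = k.-1) (t : 'I_n) (c : 'I_n -> R) :
  (forall i, t \in Z i) -> \det (Amx Z (alpha_at t c)) = 0.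
Proof.
move=> hall.
set A := Amx Z (alpha_at t c).
set v : 'cV[{poly R}]_k := \col_(j < k) 'X ^+ j.
have Av : A *m v = 0.
  apply/matrixP => i j; rewrite !mxE.
  have hs : (size (fpoly Z (alpha_at t c) i) <= k)%N.
    apply: leq_trans (@size_prod_bnd _ _ _ _ _ (fun _ => 1%N) _) _.
      by move=> j' _; rewrite size_XsubC.
    by rewrite sum1_card hZ; lia.
  rewrite (eq_bigr (fun l : 'I_k => (fpoly Z (alpha_at t c) i)`_l * 'X ^+ l)); last first.
    by move=> l _; rewrite !mxE.
  rewrite -horner_coef_wide // /fpoly horner_prod (bigD1 t) ?hall //=.
  by rewrite hornerXsubC /alpha_at eqxx subrr mul0r.
have : (\det A)%:M *m v = 0 by rewrite -mul_adj_mx -mulmxA Av mulmx0.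
move/matrixP => /(_ (Ordinal hk) ord0).
by rewrite mul_scalar_mx !mxE /= expr0 mulr1.
Qed.

Theorem lemma1 (n k : nat) (hk : (1 <= k)%N) (hkn : (k <= n)%N)
  (Z : 'I_k -> {set 'I_n}) (hZ : forall i, #|Z i| = k.-1)
  (t : 'I_n) (R : comNzRingType) (c : 'I_n -> R) :
  (size (Fval Z (alpha_at t c)) <= n + k - 1)%N.
Proof.
rewrite /Fval.
case: (boolP [forall i, t \in Z i]) => [/forallP hall | /forallPn [i0 hi0]].
  by rewrite det_zero // mul0r size_poly0.
apply: leq_trans (size_polyMleq _ _) _.
have hd := @det_bnd R n k Z t c; have hv := @vdm_size R n t c.
have hm : (\sum_(i < k) (t \in Z i) <= k.-1)%N.
  rewrite (bigD1 i0) //= (negPf hi0) add0n.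
  apply: (@leq_trans (\sum_(i < k | i != i0) 1)%N); first by apply: leq_sum => i _; exact: leq_b1.
  by rewrite sum1_card cardC1 card_ord.
move: hd hv hm; set x := size _; set y := size _; set m := \sum_(i < k) _; lia.
Qed.
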